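(* Let $\mu>1$ be an integer upper bound, $d>1$ an arbitrary discount factor and $v\in\mathbb{Q}$ a threshold value. Then: (1) the comparison language with upper bound $\mu$, relation $\mathsf{R}$, discount factor $d$ and threshold $v$ is a safety language for $\mathsf{R}\in\{\le,\ge,=\}$; (2) it is a co-safety language for $\mathsf{R}\in\{<,>,\neq\}$.
   Context: For an infinite sequence $A=a_0a_1\dots$, $\mathrm{DS}(A,d)=\sum_{i\ge0}a_i/d^i$. The comparison language with upper bound $\mu$, relation $\mathsf{R}\in\{<,>,\le,\ge,=,\neq\}$, discount factor $d$ and threshold value $v$ is the set of infinite words $A$ over the alphabet $\Sigma=\{-\mu,\dots,\mu\}$ such that $\mathrm{DS}(A,d)\ \mathsf{R}\ v$. For a language $L\subseteq\Sigma^\omega$, a finite word $x\in\Sigma^*$ is a bad prefix for $L$ if $x\cdot y\notin L$ for all $y\in\Sigma^\omega$; $L$ is a safety language if every word not in $L$ has a bad prefix for $L$; $L$ is a co-safety language if its complement $\Sigma^\omega\setminus L$ is a safety language. *)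

(* Defs.v *)
From Stdlib Require Import Reals ZArith QArith List.
From Coquelicot Require Import Coquelicot.
Open Scope R_scope.

Definition Sigma (mu : Z) : Type := {z : Z | (- mu <= z <= mu)%Z}.

Definition letter_val {mu : Z} (a : Sigma mu) : Z := proj1_sig a.

Definition oword (mu : Z) : Type := nat -> Sigma mu.
Definition language (mu : Z) : Type := oword mu -> Prop.

Definition DS {mu : Z} (A : oword mu) (d : R) : R :=
  Series (fun i => IZR (letter_val (A i)) / d ^ i).

Inductive relation_sym : Type := RLt | RGt | RLe | RGe | REq | RNeq.

Definition rel_holds (r : relation_sym) (x y : R) : Prop :=
  match r with
  | RLt => x < y
  | RGt => x > y
  | RLe => x <= y
  | RGe => x >= y
  | REq => x = y
  | RNeq => x <> y
  end.

Definition comparison_language (mu : Z) (r : relation_sym) (d : R) (v : Q)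
  : language mu :=
  fun A => rel_holds r (DS A d) (Q2R v).

Definition concat {mu : Z} (x : list (Sigma mu)) (y : oword mu) : oword mu :=
  fun i => match nth_error x i with
           | Some a => a
           | None => y (i - length x)%nat
           end.

Definition prefix {mu : Z} (A : oword mu) (n : nat) : list (Sigma mu) :=
  map A (seq 0 n).

Definition bad_prefix {mu : Z} (L : language mu) (x : list (Sigma mu)) : Prop :=
  forall y : oword mu, ~ L (concat x y).

Definition safety {mu : Z} (L : language mu) : Prop :=
  forall A : oword mu, ~ L A -> exists n : nat, bad_prefix L (prefix A n).

Definition complement {mu : Z} (L : language mu) : language mu :=
  fun A => ~ L A.

Definition co_safety {mu : Z} (L : language mu) : Prop :=
  safety (complement L).

(* Main.v *)
Require Import Defs.
From Stdlib Require Import Reals ZArith QArith List Lra Lia Classical.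
From Coquelicot Require Import Coquelicot.
Open Scope R_scope.

Lemma concat_prefix (mu : Z) (A y : oword mu) n i :
  (i < n)%nat -> Defs.concat (prefix A n) y i = A i.
Proof.
  intros H. unfold Defs.concat, prefix.
  rewrite nth_error_map, nth_error_seq.
  destruct (Nat.ltb_spec i n); [reflexivity | lia].
Qed.

Lemma letter_bound (mu : Z) (a : Sigma mu) : Rabs (IZR (letter_val a)) <= IZR mu.
Proof.
  destruct a as [z [H1 H2]]; simpl.
  apply Rabs_le; split.
  - rewrite <- opp_IZR. apply IZR_le. lia.
  - apply IZR_le; lia.
Qed.

Lemma term_eq (x d : R) i : 0 < d -> x / d ^ i = x * (/ d) ^ i.
Proof. intros. unfold Rdiv. rewrite pow_inv. reflexivity. Qed.

Lemma q_bounds d : 1 < d -> 0 < / d < 1.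
Proof.
  intros. split. apply Rinv_0_lt_compat; lra.
  rewrite <- Rinv_1. apply Rinv_lt_contravar; lra.
Qed.

Lemma norm_R (x : R) : norm x = Rabs x.
Proof. reflexivity. Qed.

Lemma ex_geom_scal (c q : R) : 0 <= q < 1 -> ex_series (fun i => c * q ^ i).
Proof.
  intros Hq.
  apply (ex_series_scal_l (K:=R_AbsRing) (V:=R_NormedModule) c (fun i => q ^ i)).
  apply ex_series_geom. rewrite Rabs_pos_eq; lra.
Qed.

Lemma term_abs (mu : Z) (A : oword mu) d i : 1 < d ->
  Rabs (IZR (letter_val (A i)) / d ^ i) <= IZR mu * (/ d) ^ i.
Proof.
  intros Hd. pose proof (q_bounds d Hd).
  rewrite term_eq by lra. rewrite Rabs_mult.
  rewrite (Rabs_pos_eq ((/d)^i)) by (apply pow_le; lra).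
  apply Rmult_le_compat_r. apply pow_le; lra. apply letter_bound.
Qed.

Lemma ex_DS (mu : Z) (A : oword mu) d : 1 < d ->
  ex_series (fun i => IZR (letter_val (A i)) / d ^ i).
Proof.
  intros Hd. pose proof (q_bounds d Hd).
  apply (ex_series_le (K:=R_AbsRing) (V:=R_CompleteNormedModule)) with (b := fun i => IZR mu * (/ d) ^ i).
  - intros i. rewrite norm_R. apply term_abs; lra.
  - apply ex_geom_scal; lra.
Qed.

Lemma approx (mu : Z) d (A B : oword mu) n : 1 < d -> (0 < n)%nat ->
  (forall i, (i < n)%nat -> A i = B i) ->
  Rabs (DS B d - DS A d) <= 2 * IZR mu * (/ d) ^ n / (1 - / d).
Proof.
  intros Hd Hn Hab. pose proof (q_bounds d Hd) as Hq.
  set (c := fun i => IZR (letter_val (B i)) / d ^ i - IZR (letter_val (A i)) / d ^ i).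
  assert (Hc : DS B d - DS A d = Series c).
  { unfold DS, c. rewrite Series_minus; auto using ex_DS. }
  assert (Hcb : forall i, Rabs (c i) <= 2 * IZR mu * (/ d) ^ i).
  { intros i. unfold c. eapply Rle_trans. apply Rabs_triang.
    rewrite Rabs_Ropp. pose proof (term_abs mu A d i Hd). pose proof (term_abs mu B d i Hd). lra. }
  assert (Hex : ex_series c).
  { apply (ex_series_le (K:=R_AbsRing) (V:=R_CompleteNormedModule)) with (b := fun i => 2 * IZR mu * (/ d) ^ i).
    intros; rewrite norm_R; auto. apply ex_geom_scal; lra. }
  rewrite Hc, (Series_incr_n c n Hn Hex).
  assert (Hs : sum_f_R0 c (Init.Nat.pred n) = 0).
  { assert (forall m, (m < n)%nat -> sum_f_R0 c m = 0).
    { induction m; intros Hm; simpl.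
      - unfold c; rewrite (Hab 0%nat Hm); ring.
      - rewrite IHm by lia. unfold c; rewrite (Hab (S m) Hm); ring. }
    apply H; lia. }
  rewrite Hs, Rplus_0_l.
  assert (Hb : forall k, Rabs (c (n + k)%nat) <= (2 * IZR mu * (/ d) ^ n) * (/ d) ^ k).
  { intros k. rewrite Rmult_assoc, <- pow_add. auto. }
  assert (Hex2 : ex_series (fun k => 2 * IZR mu * (/ d) ^ n * (/ d) ^ k)).
  { apply ex_geom_scal; lra. }
  eapply Rle_trans. apply Series_Rabs.
  { apply (ex_series_le (K:=R_AbsRing) (V:=R_CompleteNormedModule)) with (b := fun k => 2 * IZR mu * (/ d) ^ n * (/ d) ^ k); auto.
    intros; rewrite norm_R, Rabs_Rabsolu; auto. }
  eapply Rle_trans. apply Series_le with (b := fun k => 2 * IZR mu * (/ d) ^ n * (/ d) ^ k); auto.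
  intros; split; auto using Rabs_pos.
  rewrite Series_scal_l, Series_geom. unfold Rdiv; lra.
  rewrite Rabs_pos_eq; lra.
Qed.

Lemma key (mu : Z) d (A : oword mu) (P : R -> Prop) eps : (1 < mu)%Z -> 1 < d -> 0 < eps ->
  (forall x, Rabs (x - DS A d) < eps -> P x) ->
  exists n, forall y, P (DS (Defs.concat (prefix A n) y) d).
Proof.
  intros Hmu Hd He HP. pose proof (q_bounds d Hd) as Hq.
  assert (Hm : 0 < IZR mu) by (apply IZR_lt; lia).
  assert (Hy : 0 < eps * (1 - / d) / (2 * IZR mu)).
  { apply Rdiv_lt_0_compat; [apply Rmult_lt_0_compat|]; lra. }
  destruct (pow_lt_1_zero (/ d) ltac:(rewrite Rabs_pos_eq; lra) _ Hy) as [N HN].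
  exists (S N). intros y. apply HP.
  eapply Rle_lt_trans. apply (approx mu d A _ (S N)); [exact Hd | lia | ].
  intros i Hi. symmetry. apply concat_prefix; auto.
  specialize (HN (S N) ltac:(lia)). rewrite Rabs_pos_eq in HN by (apply pow_le; lra).
  apply (Rmult_lt_compat_l (2 * IZR mu)) in HN; [|lra].
  replace (2 * IZR mu * (eps * (1 - / d) / (2 * IZR mu))) with (eps * (1 - / d)) in HN by (field; lra).
  apply (Rmult_lt_reg_r (1 - / d)); [lra|].
  unfold Rdiv. rewrite Rmult_assoc, Rinv_l, Rmult_1_r by lra. exact HN.
Qed.

Theorem theorem5 (mu : Z) (d : R) (v : Q) :
  (1 < mu)%Z -> 1 < d ->
  (forall r : relation_sym, (r = RLe \/ r = RGe \/ r = REq) ->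
     safety (comparison_language mu r d v)) /\
  (forall r : relation_sym, (r = RLt \/ r = RGt \/ r = RNeq) ->
     co_safety (comparison_language mu r d v)).
Proof.
  intros Hmu Hd. split.
  - intros r Hr A HA. unfold comparison_language in HA.
    set (x := DS A d) in *. set (w := Q2R v) in *.
    destruct Hr as [-> | [-> | ->]]; simpl in HA.
    + destruct (key mu d A (fun z => ~ z <= w) (x - w) Hmu Hd) as [n Hn].
      lra. intros z Hz. apply Rabs_def2 in Hz. fold x in Hz. lra.
      exists n. intros y. apply Hn.
    + destruct (key mu d A (fun z => ~ z >= w) (w - x) Hmu Hd) as [n Hn].
      lra. intros z Hz. apply Rabs_def2 in Hz. fold x in Hz. lra.
      exists n. intros y. apply Hn.
    + destruct (key mu d A (fun z => ~ z = w) (Rabs (x - w)) Hmu Hd) as [n Hn].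
      apply Rabs_pos_lt; lra.
      intros z Hz Hzw. subst z. fold x in Hz. rewrite <- Rabs_Ropp in Hz.
      replace (- (w - x)) with (x - w) in Hz by ring. lra.
      exists n. intros y. apply Hn.
  - intros r Hr A HA. unfold complement, comparison_language in HA.
    apply NNPP in HA.
    set (x := DS A d) in *. set (w := Q2R v) in *.
    unfold bad_prefix, complement, comparison_language.
    destruct Hr as [-> | [-> | ->]]; simpl in HA; simpl.
    + destruct (key mu d A (fun z => z < w) (w - x) Hmu Hd) as [n Hn].
      lra. intros z Hz. apply Rabs_def2 in Hz. fold x in Hz. lra.
      exists n. intros y H. apply H, Hn.
    + destruct (key mu d A (fun z => z > w) (x - w) Hmu Hd) as [n Hn].
      lra. intros z Hz. apply Rabs_def2 in Hz. fold x in Hz. lra.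
      exists n. intros y H. apply H, Hn.
    + destruct (key mu d A (fun z => z <> w) (Rabs (x - w)) Hmu Hd) as [n Hn].
      apply Rabs_pos_lt; lra.
      intros z Hz Hzw. subst z. fold x in Hz. rewrite <- Rabs_Ropp in Hz.
      replace (- (w - x)) with (x - w) in Hz by ring. lra.
      exists n. intros y H. apply H, Hn.
Qed.
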